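(* Let $S$ be a virtual flat biquandle and $C_n(S)$ the free abelian group on $n$-tuples of elements of $S$. Define $d_n:C_n(S)\to C_{n-1}(S)$ by $$d_n(a_1,\dots,a_n)=\sum_{i=1}^{n-1}(-1)^i\big((a_1,\dots,\widehat{a_i},\dots,a_n)-(a_1,\dots,\widehat{a_i},\dots,a_{n-1},a_n\circ a_i)\big),$$ where $\widehat{a_i}$ denotes omission of $a_i$. Then $d_{n-1}\circ d_n=0$ for all $n$.
   Context: A virtual flat biquandle is a set $S$ with two binary operations $a\ast b$, $a\circ b$; writing $S_b(a)=a\ast b$, $T_b(a)=a\circ b$, for all $a,b\in S$: (1) $S_aS_b=S_bS_a$, $T_aT_b=T_bT_a$, $S_aT_b=T_bS_a$; (2) $S_a=S_{T_b(a)}=S_{S_b(a)}$, $T_a=T_{S_b(a)}=T_{T_b(a)}$; (3) $T_aS_a=S_aT_a=\mathrm{id}$. *)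

(* Defs.v *)
From HB Require Import structures.
From mathcomp Require Import all_boot all_order all_algebra.
From mathcomp Require Import freeg.
Set Implicit Arguments. Unset Strict Implicit. Unset Printing Implicit Defensive.
Import Order.TTheory GRing.Theory Num.Theory.
Local Open Scope ring_scope.

(* Virtual flat biquandle: ast a b = a * b = S_b(a), circ a b = a o b = T_b(a). *)
Definition virtual_flat_biquandle (S : Type) (ast circ : S -> S -> S) : Prop :=
  (forall a b x, ast (ast x b) a = ast (ast x a) b) /\
  (forall a b x, circ (circ x b) a = circ (circ x a) b) /\
  (forall a b x, ast (circ x b) a = circ (ast x a) b) /\
  (forall a b x, ast x a = ast x (circ a b) /\ ast x a = ast x (ast a b)) /\
  (forall a b x, circ x a = circ x (ast a b) /\ circ x a = circ x (circ a b)) /\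
  (forall a x, circ (ast x a) a = x /\ ast (circ x a) a = x).

Definition chains (S : choiceType) (n : nat) := {freeg (n.-tuple S) / int}.

Section Boundary.
Variables (S : choiceType) (circ : S -> S -> S) (n : nat).

(* For t = (a_1,...,a_{n+1}) and i : 'I_n (0-indexed, i.e. a_{i+1}):
   the tuple with a_{i+1} omitted. *)
Definition omit (t : (n.+1).-tuple S) (i : 'I_n) : n.-tuple S :=
  [tuple tnth t (fintype.lift (widen_ord (leqnSn n) i) j) | j < n].

(* the same tuple, with its last entry a_{n+1} replaced by a_{n+1} o a_{i+1} *)
Definition omit_circ (t : (n.+1).-tuple S) (i : 'I_n) : n.-tuple S :=
  [tuple (if val j == n.-1
          then circ (tnth t (fintype.lift (widen_ord (leqnSn n) i) j))
                    (tnth t (widen_ord (leqnSn n) i))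
          else tnth t (fintype.lift (widen_ord (leqnSn n) i) j)) | j < n].

(* d_{n+1} on generators: paper's index i ranges over 1..n, here i+1 for i : 'I_n *)
Definition bd_gen (t : (n.+1).-tuple S) : chains S n :=
  \sum_(i < n) ((-1) ^+ i.+1 : int) *: (<< omit t i >> - << omit_circ t i >>).

Definition bd : chains S n.+1 -> chains S n := fglift bd_gen.
End Boundary.

(* Main.v *)
Require Import Defs.
From HB Require Import structures.
From mathcomp Require Import all_boot all_order all_algebra.
From mathcomp Require Import freeg zify.
Import GRing.Theory.
Set Implicit Arguments. Unset Strict Implicit.


Lemma bumpE h i : bump h i = if (h <= i)%N then i.+1 else i.
Proof. by rewrite /bump; case: leqP. Qed.
Lemma bump_comm i j k : (i <= j)%N -> bump i (bump j k) = bump j.+1 (bump i k).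
Proof. move=> h; rewrite !bumpE; case: (leqP j k) => ?; case: (leqP i k) => ? /=; do 2?(case: leqP => ? /=); lia. Qed.

Section Faces.
Variables (S : choiceType) (circ : S -> S -> S).
Hypothesis hC : forall a b x, circ (circ x b) a = circ (circ x a) b.

Definition face n (e : bool) (t : (n.+1).-tuple S) (i : 'I_n) : n.-tuple S :=
  if e then omit_circ circ t i else omit t i.

Lemma tnth_face n e (t : (n.+1).-tuple S) i k :
  tnth (face e t i) k =
  if e && (val k == n.-1) then circ (tnth t (fintype.lift (widen_ord (leqnSn n) i) k))
                                    (tnth t (widen_ord (leqnSn n) i))
  else tnth t (fintype.lift (widen_ord (leqnSn n) i) k).
Proof. by case: e; rewrite /face /omit_circ /omit tnth_mktuple. Qed.

Lemma tnth_val m (t : m.-tuple S) (x y : 'I_m) : val x = val y -> tnth t x = tnth t y.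
Proof. by move=> /val_inj ->. Qed.

Lemma face_comm n (e e' : bool) (t : (n.+2).-tuple S) (i : 'I_n.+1) (j : 'I_n)
   (i' : 'I_n) (j1 : 'I_n.+1) :
  (i <= j)%N -> i' = i :> nat -> j1 = j.+1 :> nat ->
  face e (face e' t i) j = face e' (face e t j1) i'.
Proof.
move=> hij hi hj; apply: eq_from_tnth => k.
have x0 := tnth t ord0.
rewrite !tnth_face /= !(tnth_nth x0) /=.
have hk := ltn_ord k.
have hjn := ltn_ord j.
rewrite hi hj.
case: (eqVneq (k : nat) n.-1) => hkl /=.
- have Hb1 : bump j k = n by rewrite bumpE hkl; case: leqP; lia.
  have Hb2 : bump i k = n by rewrite bumpE hkl; case: leqP; lia.
  have Hb3 : bump i j = j.+1 by rewrite bumpE; case: leqP; lia.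
  have Hb4 : bump j.+1 i = i by rewrite bumpE; case: leqP; lia.
  have Hb5 : (j == n :> nat) = false by apply/eqP; lia.
  have Hb6 : (i == n :> nat) = false by apply/eqP; lia.
  have Hb7 : bump i n = n.+1 by rewrite bumpE; case: leqP; lia.
  have Hb8 : bump j.+1 n = n.+1 by rewrite bumpE; case: leqP; lia.
  rewrite Hb1 Hb2 Hb3 Hb4 Hb5 Hb6 Hb7 Hb8 eqxx /=.
  by case: e; case: e' => //=; rewrite hC.
- have Hc1 : (bump j k == n) = false by apply/eqP; rewrite bumpE; case: leqP; lia.
  have Hc2 : (bump i k == n) = false by apply/eqP; rewrite bumpE; case: leqP; lia.
  by rewrite Hc1 Hc2 !andbF /= bump_comm.
Qed.

Local Open Scope ring_scope.

Definition sgn (k : nat) : int := (-1) ^+ k.+1.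

Definition X n (t : (n.+2).-tuple S) (i : 'I_n.+1) (j : 'I_n) : chains S n :=
  << face false (face false t i) j >> - << face true (face false t i) j >>
  - << face false (face true t i) j >> + << face true (face true t i) j >>.

Lemma X_sym n (t : (n.+2).-tuple S) (i : 'I_n.+1) (j : 'I_n) (i' : 'I_n) (j1 : 'I_n.+1) :
  (i <= j)%N -> i' = i :> nat -> j1 = j.+1 :> nat -> X t i j = X t j1 i'.
Proof.
move=> h1 h2 h3; rewrite /X !(face_comm _ _ _ h1 h2 h3).
by rewrite -!addrA; congr (_ + _); rewrite addrCA.
Qed.

HB.instance Definition _ n :=
  GRing.isAdditive.Build (chains S n.+1) (chains S n) (@bd S circ n)
    (lift_is_additive _).

Lemma bdZ n (k : int) (y : chains S n.+1) : bd circ (k *: y) = k *: bd circ y.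
Proof. by rewrite -[k in LHS]intz scaler_int raddfMz -scaler_int intz. Qed.

Lemma bdB n (y z : chains S n.+1) : bd circ (y - z) = bd circ y - bd circ z.
Proof. exact: raddfB. Qed.

Lemma bd_sum n (I : finType) (F : I -> chains S n.+1) :
  bd circ (\sum_i F i) = \sum_i bd circ (F i).
Proof. exact: raddf_sum. Qed.

Lemma bd_sumS n (T : Type) (r : seq T) (F : _ -> chains S n.+1) :
  bd circ (\sum_(z <- r) F z) = \sum_(z <- r) bd circ (F z).
Proof. exact: raddf_sum. Qed.

Lemma bdU n (z : (n.+1).-tuple S) : bd circ << z >> = bd_gen circ z.
Proof. by rewrite /bd liftU scale1r. Qed.

Lemma bd_bd_gen n (t : (n.+2).-tuple S) :
  bd circ (bd_gen circ t) = \sum_(p : 'I_n.+1 * 'I_n) (sgn p.1 * sgn p.2) *: X t p.1 p.2.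
Proof.
rewrite /bd_gen bd_sum -(pair_bigA _ (fun (i : 'I_n.+1) (j : 'I_n) => (sgn i * sgn j) *: X t i j)) /=; apply: eq_bigr => i _.
rewrite bdZ bdB !bdU /bd_gen -sumrB scaler_sumr; apply: eq_bigr => j _.
by rewrite -scalerA -scalerBr /X /face /sgn opprB addrA addrAC.
Qed.


Definition phi n (p : 'I_n.+1 * 'I_n) : 'I_n.+1 * 'I_n :=
  if (p.1 <= p.2)%N then (inord p.2.+1, insubd p.2 (p.1 : nat))
  else (inord p.2, insubd p.2 (p.1 : nat).-1).

Lemma phi_le n (i : 'I_n.+1) (j : 'I_n) : (i <= j)%N ->
  (phi (i, j)).1 = j.+1 :> nat /\ (phi (i, j)).2 = i :> nat.
Proof.
move=> h; have hj := ltn_ord j; rewrite /phi /= h /= inordK ?val_insubd; last by lia.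
by rewrite ifT //; lia.
Qed.

Lemma phi_gt n (i : 'I_n.+1) (j : 'I_n) : (j < i)%N ->
  (phi (i, j)).1 = j :> nat /\ (phi (i, j)).2 = i.-1 :> nat.
Proof.
move=> h; have hj := ltn_ord j; have hi := ltn_ord i.
rewrite /phi /= leqNgt h /= inordK ?val_insubd; last by lia.
by rewrite ifT //; lia.
Qed.

Lemma phiK n : involutive (@phi n).
Proof.
case=> i j; case: (leqP (i : nat) j) => h.
- have [h1 h2] := phi_le h.
  case E: (phi (i, j)) h1 h2 => [a b] /= h1 h2.
  have h3 : (b < a)%N by lia.
  have [h4 h5] := phi_gt h3.
  case: (phi (a, b)) h4 h5 => c d /= h4 h5.
  by congr (_, _); apply: val_inj; rewrite /=; lia.
- have [h1 h2] := phi_gt h.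
  case E: (phi (i, j)) h1 h2 => [a b] /= h1 h2.
  have h3 : (a <= b)%N by lia.
  have [h4 h5] := phi_le h3.
  case: (phi (a, b)) h4 h5 => c d /= h4 h5.
  by congr (_, _); apply: val_inj; rewrite /=; lia.
Qed.

Lemma sgn_flip a b c d : (a + b).+1 = (c + d)%N -> sgn c * sgn d = - (sgn a * sgn b).
Proof.
move=> h; rewrite /sgn -!exprD !addSn !addnS -h exprS mulN1r //.
Qed.

Lemma sgn_flip' a b c d : (c + d).+1 = (a + b)%N -> sgn c * sgn d = - (sgn a * sgn b).
Proof. by move=> h; rewrite (sgn_flip h) opprK. Qed.

Lemma bd_bd_gen0 n (t : (n.+2).-tuple S) : bd circ (bd_gen circ t) = 0.
Proof.
rewrite bd_bd_gen.
set T := \sum_(p : 'I_n.+1 * 'I_n) _.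
have HT : T = - T.
  rewrite {1}/T (reindex_inj (inv_inj (@phiK n))) /T -sumrN.
  apply: eq_bigr => -[i j] _ /=.
  case: (leqP (i : nat) j) => h.
  - have [h1 h2] := phi_le h.
    rewrite (sgn_flip (a := i) (b := j)) ?h1 ?h2; last by lia.
    by rewrite -(X_sym t h h2 h1) scaleNr.
  - have [h1 h2] := phi_gt h.
    rewrite (sgn_flip' (a := i) (b := j)) ?h1 ?h2; last by lia.
    have h3 : ((phi (i, j)).1 <= (phi (i, j)).2)%N by rewrite h1 h2; lia.
    have h4 : (i : nat) = ((phi (i, j)).2).+1 by rewrite h2; lia.
    by rewrite (X_sym t h3 (esym h1) h4) scaleNr.
apply/eqP/freeg_eqP => z; rewrite coeff0.
have := congr1 (coeff z) HT; rewrite coeffN; lia.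
Qed.

Lemma bdbd n (x : chains S n.+2) : bd circ (bd circ x) = 0.
Proof.
rewrite -(freeg_sumE x) !bd_sumS big1 // => z _.
by rewrite /bd liftU -/(bd circ _) bdZ bd_bd_gen0 scaler0.
Qed.
End Faces.

Unset Implicit Arguments.
Set Strict Implicit.
Local Open Scope ring_scope.

Theorem lemma5p3 (S : choiceType) (ast circ : S -> S -> S)
  (hS : virtual_flat_biquandle ast circ) (n : nat) (x : chains S n.+2) :
  @bd S circ n (@bd S circ n.+1 x) = 0.
Proof.
have hC := hS.2.1.
exact: (bdbd hC x).
Qed.
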